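(* Let $K\ge 1$ and $M\ge 2$ be integers, and let $p>0$, $\beta_k>0$, $\alpha>0$, $p_{ce}>0$, $\delta_k>0$, $\sigma^2>0$ be real numbers and $\zeta_k\in(0,1]$. Let $h$ be a circularly-symmetric complex Gaussian random variable, $h\sim\mathcal{CN}(0,\beta_k)$ (so $|h|^2$ is exponentially distributed with mean $\beta_k$), and define $$\phi=\mathbb{E}\left\{\frac{1}{\frac{\beta_k |h|^2 \alpha p_{ce}\delta_k}{K\sigma^2}+1}\right\},\qquad P_{Ik}=p\,\beta_k\left[\zeta_k\left(M-(M-1)\phi-1\right)+1\right].$$ Define $$\mathcal{L}_1(\alpha,p_{ce})=1-\frac{K\sigma^2}{\beta_k^2\alpha p_{ce}\delta_k}\ln\!\left(1+\frac{\beta_k^2\alpha p_{ce}\delta_k}{K\sigma^2}\right),\qquad \mathcal{L}_2(\alpha,p_{ce})=1-\frac{K\sigma^2}{2\beta_k^2\alpha p_{ce}\delta_k}\ln\!\left(1+\frac{2\beta_k^2\alpha p_{ce}\delta_k}{K\sigma^2}\right).$$ Then $$P_{Ik}^{L}:=p\beta_k\left[\zeta_k(M-1)\mathcal{L}_1(\alpha,p_{ce})+1\right] \;<\; P_{Ik} \;<\; p\beta_k\left[\zeta_k(M-1)\mathcal{L}_2(\alpha,p_{ce})+1\right]=:P_{Ik}^{U}.$$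
   Context: Setting: a reader with $M$ transmit antennas powers $K$ single-antenna backscatter tags. $P_{Ik}$ is the incident signal power at tag $k$ when the reader transmits a signal of power $p$ with energy beamformer $\sum_{j}\sqrt{\zeta_j}\,\hat{\mathbf h}_{jr}^*/\|\hat{\mathbf h}_{jr}\|$ built from least-squares estimates of the backscatter channel; $\beta_k$ is the path loss to tag $k$, $\zeta_k$ the energy-allocation weight of tag $k$, $\alpha$ the channel-estimation duration (in symbol periods), $p_{ce}$ the per-antenna pilot power, $\delta_k$ the reflection coefficient of tag $k$, $\sigma^2$ the noise power, and $h$ models the unknown tag-to-reader (backward) channel coefficient. The closed form of $P_{Ik}$ displayed in the claim (expectation over the unknown backward channel) is taken as its definition. *)

(* Defs.v *)
From HB Require Import structures.
From mathcomp Require Import all_boot all_order all_algebra.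
From mathcomp Require Import all_classical all_reals all_analysis.
From mathcomp Require Import exponential_distribution.
Set Implicit Arguments. Unset Strict Implicit. Unset Printing Implicit Defensive.
Import Order.TTheory GRing.Theory Num.Theory.
Local Open Scope classical_set_scope.
Local Open Scope ring_scope.

(* phi = E[ 1 / (beta |h|^2 alpha pce delta / (K sigma2) + 1) ], where
   X = |h|^2 ~ Exp(mean beta), i.e. rate beta^-1, density exponential_pdf. *)
Definition phi {R : realType} (K : nat) (beta alpha pce delta sigma2 : R) : R :=
  Rintegral lebesgue_measure [set: R]
    (fun x => exponential_pdf (beta^-1) x *
              (beta * x * alpha * pce * delta / (K%:R * sigma2) + 1)^-1).

Definition P_Ik {R : realType} (K M : nat) (p beta alpha pce delta sigma2 zeta : R) : R :=
  p * beta * (zeta * (M%:R - (M%:R - 1) * phi K beta alpha pce delta sigma2 - 1) + 1).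

Definition L1 {R : realType} (K : nat) (beta alpha pce delta sigma2 : R) : R :=
  1 - K%:R * sigma2 / (beta ^+ 2 * alpha * pce * delta)
      * ln (1 + beta ^+ 2 * alpha * pce * delta / (K%:R * sigma2)).

Definition L2 {R : realType} (K : nat) (beta alpha pce delta sigma2 : R) : R :=
  1 - K%:R * sigma2 / (2 * beta ^+ 2 * alpha * pce * delta)
      * ln (1 + 2 * beta ^+ 2 * alpha * pce * delta / (K%:R * sigma2)).

(* Main.v *)
Require Import Defs.
From HB Require Import structures.
From mathcomp Require Import all_boot all_order all_algebra.
From mathcomp Require Import all_classical all_reals all_analysis.
From mathcomp Require Import exponential_distribution.
From mathcomp Require Import measurable_realfun.
From mathcomp Require Import ring lra.
Import Order.TTheory GRing.Theory Num.Theory.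
Import numFieldTopology.Exports.
Local Open Scope classical_set_scope.
Local Open Scope ring_scope.

Lemma is_derive_ext {R : realType} {f g : R -> R} {x df dg : R} :
  is_derive x 1 f df -> (forall y, f y = g y) -> df = dg -> is_derive x 1 g dg.
Proof. by move=> h /funext <- <-. Qed.

Lemma dlin {R : realType} (a c x : R) : is_derive x 1 (fun y => a + c * y) c.
Proof.
have h := (is_deriveD (is_derive_cst a x 1)
   (is_deriveM (is_derive_cst c x 1) (is_derive_id x 1))).

apply: (is_derive_ext h).
  by [].
by rewrite /= scaler0 addr0 add0r /GRing.scale /= mulr1.
Qed.

Lemma dE {R : realType} (lam x : R) :
  is_derive x 1 (fun y => expR (- (lam * y))) (- lam * expR (- (lam * x))).
Proof.
have h := @is_derive1_comp R expR (fun y => 0 + - lam * y) x _ _ (@is_derive_expR R (0 + - lam * x)) (dlin 0 (- lam) x).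
apply: (is_derive_ext h).
  by move=> y /=; rewrite add0r mulNr.
by rewrite add0r mulNr mulrC.
Qed.

Lemma dG {R : realType} (c x : R) : 1 + c * x != 0 ->
  is_derive x 1 (fun y => (1 + c * y)^-1) (- c * (1 + c * x)^-2).
Proof.
move=> hx.
have h := @is_deriveV R (fun y => 1 + c * y) x c 1 hx (dlin 1 c x).
apply: (is_derive_ext h) => //.
change (- (1 + c * x) ^- 2 * c = - c / (1 + c * x) ^+ 2); by rewrite !mulNr mulrC.
Qed.

Lemma dLn {R : realType} (c x : R) : 0 < 1 + c * x ->
  is_derive x 1 (fun y => ln (1 + c * y)) (c * (1 + c * x)^-1).
Proof.
move=> hx.
have h := @is_derive1_comp R (@ln R) (fun y => 1 + c * y) x _ _ (is_derive1_ln hx) (dlin 1 c x).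
apply: (is_derive_ext h) => //.
by rewrite mulrC.
Qed.

Lemma dD {R : realType} {f g : R -> R} {x df dg : R} :
  is_derive x 1 f df -> is_derive x 1 g dg ->
  is_derive x 1 (fun y => f y + g y) (df + dg).
Proof. by move=> h1 h2; apply: (is_derive_ext (is_deriveD h1 h2)). Qed.

Lemma dM {R : realType} {f g : R -> R} {x df dg : R} :
  is_derive x 1 f df -> is_derive x 1 g dg ->
  is_derive x 1 (fun y => f y * g y) (f x * dg + df * g x).
Proof.
move=> h1 h2; apply: (is_derive_ext (is_deriveM h1 h2)) => //.
by rewrite /GRing.scale /= [_ * df]mulrC.
Qed.

Lemma dK {R : realType} (k x : R) : is_derive x 1 (fun _ : R => k) 0.
Proof. exact: (is_derive_ext (is_derive_cst k x 1)). Qed.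

Lemma dCM {R : realType} (k : R) {f : R -> R} {x df : R} :
  is_derive x 1 f df -> is_derive x 1 (fun y => k * f y) (k * df).
Proof.
move=> h; apply: (is_derive_ext (dM (dK k x) h)) => //.
by rewrite mul0r addr0.
Qed.

Definition Ef {R : realType} (lam y : R) := expR (- (lam * y)).
Definition Gf {R : realType} (c y : R) := (1 + c * y)^-1.

Lemma dEf {R : realType} (lam x : R) :
  is_derive x 1 (Ef lam) (- lam * Ef lam x).
Proof. exact: dE. Qed.

Lemma dGf {R : realType} (c x : R) : 0 <= c -> 0 <= x ->
  is_derive x 1 (Gf c) (- c * Gf c x ^+ 2).
Proof.
move=> c0 x0; have hx : 0 < 1 + c * x by rewrite ltr_pwDl // mulr_ge0.
apply: (is_derive_ext (dG c x (lt0r_neq0 hx))) => //.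
by rewrite /Gf exprVn.
Qed.

Lemma dLnf {R : realType} (c x : R) : 0 <= c -> 0 <= x ->
  is_derive x 1 (fun y => ln (1 + c * y)) (c * Gf c x).
Proof.
move=> c0 x0; have hx : 0 < 1 + c * x by rewrite ltr_pwDl // mulr_ge0.
exact: dLn c x hx.
Qed.

Definition F1 {R : realType} (lam c y : R) :=
  - (Ef lam y * Gf c y) + (1 + lam / c) * Gf c y + (lam / c) * ln (1 + c * y).
Definition u1 {R : realType} (lam c y : R) :=
  lam * Ef lam y * Gf c y + c * Ef lam y * Gf c y ^+ 2
  - (c + lam) * Gf c y ^+ 2 + lam * Gf c y.

Lemma dF1 {R : realType} (lam c x : R) : 0 < c -> 0 <= x ->
  is_derive x 1 (F1 lam c) (u1 lam c x).
Proof.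
move=> c0 x0.
have hE := dEf lam x; have hG := dGf c x (ltW c0) x0; have hL := dLnf c x (ltW c0) x0.
have h := dD (dD (dCM (-1) (dM hE hG)) (dCM (1 + lam / c) hG)) (dCM (lam / c) hL).
apply: (is_derive_ext h).
  by move=> y; rewrite /F1 mulN1r.
rewrite /u1.
have hx : 1 + c * x != 0 by rewrite lt0r_neq0 // ltr_pwDl // mulr_ge0 // ltW.
rewrite /Gf; field.
by rewrite hx lt0r_neq0.
Qed.
Section gen.
Context {R : realType}.
Notation mu := (@lebesgue_measure R).

Lemma dwc (f : R -> R) (i : interval R) :
  (forall x, x \in i -> derivable f x 1) -> {within [set` i], continuous f}.
Proof. by move=> h; apply: derivable_within_continuous => x /h. Qed.

Lemma ftc_cc (u F : R -> R) (a b : R) : (a < b)%R ->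
  (forall x, x \in `[a, b] -> is_derive x 1 F (u x)) ->
  (forall x, x \in `[a, b] -> derivable u x 1) ->
  (\int[mu]_(x in `[a, b]) (u x)%:E = (F b - F a)%:E)%E.
Proof.
move=> ab dF du; rewrite EFinB.
have dF' : forall x, x \in `[a, b] -> derivable F x 1.
  by move=> x /dF [].
apply: continuous_FTC2 => //.
- exact: dwc.
- split.
  + move=> x xab; apply: dF'; exact: subset_itv_oo_cc.
  + apply: cvg_at_right_filter.
    apply/differentiable_continuous/derivable1_diffP/dF'.
    by rewrite in_itv /= lexx ltW.
  + apply: cvg_at_left_filter.
    apply/differentiable_continuous/derivable1_diffP/dF'.
    by rewrite in_itv /= lexx ltW.
- move=> x xab; rewrite derive1E.
  by have [_ ->] := dF x (subset_itv_oo_cc xab).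
Qed.

Lemma int_cc (f : R -> R) (a b : R) :
  (forall x, x \in `[a, b] -> derivable f x 1) ->
  mu.-integrable `[a, b] (EFin \o f).
Proof.
move=> df; apply: continuous_compact_integrable; first exact: segment_compact.
exact: dwc.
Qed.

Lemma meas_cy (f : R -> R) (a : R) :
  (forall x, x \in `[a, +oo[ -> derivable f x 1) ->
  measurable_fun `[a, +oo[ (fun x : R => (f x)%:E).
Proof.
move=> df; apply/measurable_EFinP.
apply: subspace_continuous_measurable_fun => //.
exact: dwc.
Qed.

Lemma ftc_cy (u F : R -> R) (a l : R) :
  (forall x, x \in `[a, +oo[ -> is_derive x 1 F (u x)) ->
  (forall x, x \in `[a, +oo[ -> derivable u x 1) ->
  (forall x, (a <= x)%R -> (0 <= u x)%R) ->
  F x @[x --> +oo%R] --> l ->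
  (\int[mu]_(x in `[a, +oo[) (u x)%:E = (l - F a)%:E)%E.
Proof.
move=> dF du u0 Fl; rewrite EFinB.
have dF' : forall x, x \in `[a, +oo[ -> derivable F x 1.
  by move=> x /dF [].
apply: ge0_continuous_FTC2y => //.
- exact: dwc.
- by move=> x ax; apply: dF'; rewrite in_itv /= andbT ltW.
- apply: cvg_at_right_filter.
  apply/differentiable_continuous/derivable1_diffP/dF'.
  by rewrite in_itv /= lexx.
- move=> x xa; rewrite derive1E.
  have xa' : x \in `[a, +oo[ by move: xa; rewrite !in_itv /= !andbT; apply: ltW.
  by have [_ ->] := dF x xa'.
Qed.
End gen.
Lemma limE {R : realType} (lam : R) : 0 < lam ->
  (fun y => expR (- (lam * y))) y @[y --> +oo] --> 0.
Proof.
move=> lam0.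
rewrite (_ : (fun y => expR (- (lam * y))) =
             (fun z => expR (- z)) \o (fun z => lam * z)); last by [].
apply: (@cvg_comp _ _ _ _ _ _ (pinfty_nbhs R)); last exact: cvgr_expR.
exact: gt0_cvgMry.
Qed.

Lemma lim0 {R : realType} (lam Bd : R) (P : R -> R) : 0 < lam ->
  (forall y, 0 <= y -> `|P y| <= Bd) ->
  (fun y => expR (- (lam * y)) * P y) y @[y --> +oo] --> 0.
Proof.
move=> lam0 hP.
have hE := @limE R lam lam0.
have h1 : (fun y => Bd * expR (- (lam * y))) y @[y --> +oo] --> 0.
  have := cvgM (cvg_cst Bd) hE; rewrite mulr0; exact.
have h2 : (fun y => - (Bd * expR (- (lam * y)))) y @[y --> +oo] --> 0.
  have := cvgN h1; rewrite oppr0; exact.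
apply: (squeeze_cvgr _ h2 h1).
near=> y.
have y0 : 0 <= y by near: y; exact: nbhs_pinfty_ge.
have := hP y y0; rewrite ler_norml => /andP[hl hr].
have e0 : 0 < expR (- (lam * y)) := expR_gt0 _.
apply/andP; split; rewrite /=; nra.
Unshelve. all: by end_near. Qed.
Lemma der_ext {R : realType} {f g : R -> R} {x : R} :
  derivable f x 1 -> (forall y, f y = g y) -> derivable g x 1.
Proof. by move=> h /funext <-. Qed.

Lemma isd_der {R : realType} {f : R -> R} {x df : R} :
  is_derive x 1 f df -> derivable f x 1.
Proof. by move=> h; exact: ex_derive. Qed.

Definition ff {R : realType} (lam c y : R) := lam * Ef lam y * Gf c y.

Lemma Gf_gt0 {R : realType} (c y : R) : 0 <= c -> 0 <= y -> 0 < Gf c y.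
Proof. by move=> c0 y0; rewrite /Gf invr_gt0 ltr_pwDl // mulr_ge0. Qed.

Lemma Gf_le1 {R : realType} (c y : R) : 0 <= c -> 0 <= y -> Gf c y <= 1.
Proof.
move=> c0 y0; rewrite /Gf invf_le1 ?ltr_pwDl ?mulr_ge0 //.
by rewrite lerDl mulr_ge0.
Qed.

Lemma Ef_gt0 {R : realType} (lam y : R) : 0 < Ef lam y.
Proof. exact: expR_gt0. Qed.

Lemma Gf_inv {R : realType} (c y : R) : 0 <= c -> 0 <= y -> Gf c y * (1 + c * y) = 1.
Proof. by move=> c0 y0; rewrite /Gf mulVf // lt0r_neq0 // ltr_pwDl // mulr_ge0. Qed.

Lemma dff {R : realType} (lam c x : R) : 0 <= c -> 0 <= x -> derivable (ff lam c) x 1.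
Proof.
move=> c0 x0.
by apply: (der_ext (isd_der (dM (dCM lam (dEf lam x)) (dGf c x c0 x0)))).
Qed.

Lemma ff_ge0 {R : realType} (lam c y : R) : 0 <= lam -> 0 <= c -> 0 <= y -> 0 <= ff lam c y.
Proof.
move=> l0 c0 y0; have hE := Ef_gt0 lam y; have hG := Gf_gt0 c y c0 y0.
by rewrite /ff !mulr_ge0 // ltW.
Qed.

Lemma du1 {R : realType} (lam c x : R) : 0 <= c -> 0 <= x -> derivable (u1 lam c) x 1.
Proof.
move=> c0 x0.
have hE := dEf lam x; have hG := dGf c x c0 x0.
have h := dD (dD (dD (dM (dCM lam hE) hG) (dM (dCM c hE) (dM hG hG)))
   (dCM (- (c + lam)) (dM hG hG))) (dCM lam hG).
apply: (der_ext (isd_der h)) => y.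
by rewrite /u1; ring.
Qed.

Lemma ff_le_u1 {R : realType} (lam c y : R) : 0 < lam -> 0 < c -> 0 <= y ->
  ff lam c y <= u1 lam c y.
Proof.
move=> l0 c0 y0.
rewrite -subr_ge0.
have -> : u1 lam c y - ff lam c y =
   c * Gf c y ^+ 2 * (Ef lam y - (1 - lam * y)).
  have hy : 1 + c * y != 0 by rewrite lt0r_neq0 // ltr_pwDl // mulr_ge0 // ltW.
  rewrite /u1 /ff /Gf; field; exact: hy.
have hG := Gf_gt0 c y (ltW c0) y0.
apply: mulr_ge0; first by apply: mulr_ge0; [exact: ltW | exact: exprn_ge0 (ltW hG)].
rewrite subr_ge0 /Ef; exact: expR_ge1Dx.
Qed.

Section cmp.
Context {R : realType}.
Notation mu := (@lebesgue_measure R).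

Lemma cmp_cc_le (f u F : R -> R) (a b : R) : a < b ->
  (forall x, x \in `[a, b] -> derivable f x 1) ->
  (forall x, x \in `[a, b] -> is_derive x 1 F (u x)) ->
  (forall x, x \in `[a, b] -> derivable u x 1) ->
  (forall x, x \in `[a, b] -> f x <= u x) ->
  (\int[mu]_(x in `[a, b]) (f x)%:E <= (F b - F a)%:E)%E.
Proof.
move=> ab df dF du fu.
rewrite -(ftc_cc u F a b ab dF du).
apply: le_integral => //; [exact: int_cc | exact: int_cc |].
by move=> x xab; rewrite lee_fin; apply: fu; rewrite inE in xab.
Qed.

Lemma cmp_cc_ge (f u F : R -> R) (a b : R) : a < b ->
  (forall x, x \in `[a, b] -> derivable f x 1) ->
  (forall x, x \in `[a, b] -> is_derive x 1 F (u x)) ->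
  (forall x, x \in `[a, b] -> derivable u x 1) ->
  (forall x, x \in `[a, b] -> u x <= f x) ->
  ((F b - F a)%:E <= \int[mu]_(x in `[a, b]) (f x)%:E)%E.
Proof.
move=> ab df dF du fu.
rewrite -(ftc_cc u F a b ab dF du).
apply: le_integral => //; [exact: int_cc | exact: int_cc |].
by move=> x xab; rewrite lee_fin; apply: fu; rewrite inE in xab.
Qed.

Lemma cmp_cy_le (f u F : R -> R) (a l : R) :
  (forall x, x \in `[a, +oo[ -> derivable f x 1) ->
  (forall x, x \in `[a, +oo[ -> is_derive x 1 F (u x)) ->
  (forall x, x \in `[a, +oo[ -> derivable u x 1) ->
  (forall x, a <= x -> 0 <= f x <= u x) ->
  F x @[x --> +oo] --> l ->
  (\int[mu]_(x in `[a, +oo[) (f x)%:E <= (l - F a)%:E)%E.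
Proof.
move=> df dF du fu Fl.
have u0 : forall x, a <= x -> 0 <= u x.
  by move=> x ax; have /andP[h1 h2] := fu x ax; exact: le_trans h2.
rewrite -(ftc_cy u F a l dF du u0 Fl).
apply: ge0_le_integral => //.
- move=> x; rewrite /= in_itv /= andbT => ax; rewrite lee_fin.
  by have /andP[] := fu x ax.
- exact: meas_cy.
- exact: meas_cy.
- move=> x; rewrite /= in_itv /= andbT => ax; rewrite lee_fin.
  by have /andP[] := fu x ax.
Qed.

Lemma cmp_cy_ge (f u F : R -> R) (a l : R) :
  (forall x, x \in `[a, +oo[ -> derivable f x 1) ->
  (forall x, x \in `[a, +oo[ -> is_derive x 1 F (u x)) ->
  (forall x, x \in `[a, +oo[ -> derivable u x 1) ->
  (forall x, a <= x -> 0 <= u x <= f x) ->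
  F x @[x --> +oo] --> l ->
  ((l - F a)%:E <= \int[mu]_(x in `[a, +oo[) (f x)%:E)%E.
Proof.
move=> df dF du fu Fl.
have u0 : forall x, a <= x -> 0 <= u x.
  by move=> x ax; have /andP[h1 h2] := fu x ax.
rewrite -(ftc_cy u F a l dF du u0 Fl).
apply: ge0_le_integral => //.
- move=> x; rewrite /= in_itv /= andbT => ax; rewrite lee_fin.
  exact: u0.
- exact: meas_cy.
- exact: meas_cy.
- move=> x; rewrite /= in_itv /= andbT => ax; rewrite lee_fin.
  by have /andP[] := fu x ax.
Qed.
End cmp.
Definition Aup {R : realType} (lam c : R) := c / (2 * c + lam).
Definition Hf {R : realType} (lam c y : R) :=
  Ef lam y * (Aup lam c * Gf c y ^+ 2 - Gf c y).
Definition hU {R : realType} (lam c y : R) :=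
  Ef lam y * (lam * Gf c y + (c - lam * Aup lam c) * Gf c y ^+ 2
              - 2 * Aup lam c * c * Gf c y ^+ 3).

Lemma dHf {R : realType} (lam c x : R) : 0 < lam -> 0 < c -> 0 <= x ->
  is_derive x 1 (Hf lam c) (hU lam c x).
Proof.
move=> l0 c0 x0.
have hE := dEf lam x; have hG := dGf c x (ltW c0) x0.
have h := dM hE (dD (dCM (Aup lam c) (dM hG hG)) (dCM (-1) hG)).
apply: (is_derive_ext h) => [y|]; first by rewrite /Hf; ring.
have hx : 1 + c * x != 0 by rewrite lt0r_neq0 // ltr_pwDl // mulr_ge0 // ltW.
rewrite /hU /Gf; field; exact: hx.
Qed.

Lemma dhU {R : realType} (lam c x : R) : 0 <= c -> 0 <= x ->
  derivable (hU lam c) x 1.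
Proof.
move=> c0 x0.
have hE := dEf lam x; have hG := dGf c x c0 x0.
have h := dM hE (dD (dD (dCM lam hG) (dCM (c - lam * Aup lam c) (dM hG hG)))
  (dCM (- (2 * Aup lam c * c)) (dM hG (dM hG hG)))).
by apply: (der_ext (isd_der h)) => y; rewrite /hU; ring.
Qed.

Definition sS {R : realType} (lam c : R) := c / lam.
Definition aA {R : realType} (lam c : R) := 1 + 2 * sS lam c.
Definition G1 {R : realType} (lam c y : R) :=
  - (Ef lam y * Gf c y) + sS lam c * Ef lam y * Gf c y ^+ 2
  + (2 * sS lam c)^-1 * (- (aA lam c ^+ 2 / 2) * Gf c y ^+ 2
                         + 2 * aA lam c * Gf c y + ln (1 + c * y)).
Definition mL {R : realType} (lam c y : R) :=
  lam * Ef lam y * Gf c y - 2 * sS lam c * c * Ef lam y * Gf c y ^+ 3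
  + 2 * sS lam c * c * (1 - lam * y / 2) ^+ 2 * Gf c y ^+ 3.

Lemma dG1 {R : realType} (lam c x : R) : 0 < lam -> 0 < c -> 0 <= x ->
  is_derive x 1 (G1 lam c) (mL lam c x).
Proof.
move=> l0 c0 x0.
have hE := dEf lam x; have hG := dGf c x (ltW c0) x0.
have hL := dLnf c x (ltW c0) x0.
have h := dD (dD (dCM (-1) (dM hE hG)) (dM (dCM (sS lam c) hE) (dM hG hG)))
  (dCM ((2 * sS lam c)^-1) (dD (dD (dCM (- (aA lam c ^+ 2 / 2)) (dM hG hG))
     (dCM (2 * aA lam c) hG)) hL)).
apply: (is_derive_ext h) => [y|]; first by rewrite /G1; ring.
have hx : 1 + c * x != 0 by rewrite lt0r_neq0 // ltr_pwDl // mulr_ge0 // ltW.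
rewrite /mL /Gf /aA /sS; field.
by rewrite hx lt0r_neq0 // lt0r_neq0.
Qed.

Lemma dmL {R : realType} (lam c x : R) : 0 <= c -> 0 <= x ->
  derivable (mL lam c) x 1.
Proof.
move=> c0 x0.
have hE := dEf lam x; have hG := dGf c x c0 x0.
have hl := dlin 1 (- (lam / 2)) x.
have h := dD (dD (dM (dCM lam hE) hG)
   (dCM (- (2 * sS lam c * c)) (dM hE (dM hG (dM hG hG)))))
   (dCM (2 * sS lam c * c) (dM (dM hl hl) (dM hG (dM hG hG)))).
by apply: (der_ext (isd_der h)) => y; rewrite /mL; ring.
Qed.

Definition A2 {R : realType} (lam c : R) := 2 * sS lam c * c / (3 * c + lam).
Definition G2 {R : realType} (lam c y : R) :=
  Ef lam y * (sS lam c * Gf c y ^+ 2 - Gf c y - A2 lam c * Gf c y ^+ 3).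
Definition lL {R : realType} (lam c y : R) :=
  Ef lam y * (lam * Gf c y + (lam * A2 lam c - 2 * sS lam c * c) * Gf c y ^+ 3
              + 3 * A2 lam c * c * Gf c y ^+ 4).

Lemma dG2 {R : realType} (lam c x : R) : 0 < lam -> 0 < c -> 0 <= x ->
  is_derive x 1 (G2 lam c) (lL lam c x).
Proof.
move=> l0 c0 x0.
have hE := dEf lam x; have hG := dGf c x (ltW c0) x0.
have h := dM hE (dD (dD (dCM (sS lam c) (dM hG hG)) (dCM (-1) hG))
   (dCM (- A2 lam c) (dM hG (dM hG hG)))).
apply: (is_derive_ext h) => [y|]; first by rewrite /G2; ring.
have hx : 1 + c * x != 0 by rewrite lt0r_neq0 // ltr_pwDl // mulr_ge0 // ltW.
rewrite /lL /Gf /sS; field.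
by rewrite hx lt0r_neq0.
Qed.

Lemma dlL {R : realType} (lam c x : R) : 0 <= c -> 0 <= x ->
  derivable (lL lam c) x 1.
Proof.
move=> c0 x0.
have hE := dEf lam x; have hG := dGf c x c0 x0.
have h := dM hE (dD (dD (dCM lam hG)
  (dCM (lam * A2 lam c - 2 * sS lam c * c) (dM hG (dM hG hG))))
  (dCM (3 * A2 lam c * c) (dM hG (dM hG (dM hG hG))))).
by apply: (der_ext (isd_der h)) => y; rewrite /lL; ring.
Qed.

Lemma hU_ok {R : realType} (lam c y : R) : 0 < lam -> 0 < c -> 0 <= y ->
  0 <= ff lam c y <= hU lam c y.
Proof.
move=> l0 c0 y0.
apply/andP; split; first exact: (ff_ge0 lam c y (ltW l0) (ltW c0) y0).
rewrite -subr_ge0.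
have -> : hU lam c y - ff lam c y =
  2 * Aup lam c * c * Ef lam y * Gf c y ^+ 2 * (1 - Gf c y).
  rewrite /hU /ff /Aup; field.
  by rewrite lt0r_neq0 // addr_gt0 // mulr_gt0.
have hG := Gf_gt0 c y (ltW c0) y0; have hG1 := Gf_le1 c y (ltW c0) y0.
have hE := Ef_gt0 lam y.
have hA : 0 < Aup lam c by rewrite /Aup divr_gt0 // addr_gt0 // mulr_gt0.
apply: mulr_ge0; last by rewrite subr_ge0.
apply: ltW; do ![assumption | apply: mulr_gt0 | apply: exprn_gt0 | done].
Qed.

Lemma mL_ok {R : realType} (lam c y : R) : 0 < lam -> 0 < c -> 0 <= y ->
  y <= 2 / lam -> mL lam c y <= ff lam c y.
Proof.
move=> l0 c0 y0 y2.
rewrite -subr_ge0.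
have -> : ff lam c y - mL lam c y =
  2 * sS lam c * c * Gf c y ^+ 3 * (Ef lam y - (1 - lam * y / 2) ^+ 2).
  by rewrite /ff /mL; ring.
have hG := Gf_gt0 c y (ltW c0) y0.
have hs : 0 < sS lam c by rewrite /sS divr_gt0.
apply: mulr_ge0; first by apply: ltW; do ![assumption | apply: mulr_gt0 | apply: exprn_gt0 | done].
rewrite subr_ge0.
have hE : Ef lam y = expR (- (lam * y / 2)) ^+ 2.
  by rewrite /Ef -expRM_natl; congr expR; field.
have h1 : 0 <= 1 - lam * y / 2.
  rewrite subr_ge0 ler_pdivrMr // mul1r.
  by rewrite -(ler_pM2l l0) in y2; move: y2; rewrite mulrCA divff ?mulr1 // lt0r_neq0.
have h2 : 1 - lam * y / 2 <= expR (- (lam * y / 2)) := expR_ge1Dx _.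
rewrite hE; nra.
Qed.

Lemma lL_ok {R : realType} (lam c y : R) : 0 < lam -> 0 < c ->
  2 / lam <= y -> 0 <= lL lam c y <= ff lam c y.
Proof.
move=> l0 c0 y2.
have y0 : 0 <= y by apply: le_trans y2; rewrite divr_ge0 // ltW.
have hG := Gf_gt0 c y (ltW c0) y0; have hG1 := Gf_le1 c y (ltW c0) y0.
have hGi := Gf_inv c y (ltW c0) y0.
have hE := Ef_gt0 lam y.
have hs : 0 < sS lam c by rewrite /sS divr_gt0.
have hA : 0 < A2 lam c.
  rewrite /A2; apply: divr_gt0; first by do ![assumption|apply: mulr_gt0|done].
  by apply: addr_gt0 => //; apply: mulr_gt0.
apply/andP; split.
  have ly : 2 <= lam * y.
    by move: y2; rewrite ler_pdivrMr // mulrC.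
  have cg : 2 * (c * Gf c y) <= lam.
    have : c * Gf c y * y <= 1 by nra.
    nra.
  have -> : lL lam c y = Ef lam y * Gf c y * (lam - 2 * (c * Gf c y) ^+ 2 / lam)
     + Ef lam y * Gf c y ^+ 3 * (lam * A2 lam c + 3 * A2 lam c * c * Gf c y).
    rewrite /lL /sS; field; exact: lt0r_neq0 l0.
  apply: addr_ge0.
    apply: mulr_ge0; first by apply: mulr_ge0; apply: ltW.
    rewrite subr_ge0 ler_pdivrMr // -expr2.
    have h0 : 0 <= c * Gf c y by rewrite mulr_ge0 // ltW.
    nra.
  apply: mulr_ge0; first by apply: mulr_ge0; rewrite ?exprn_ge0 // ltW.
  by apply: addr_ge0; apply: ltW; do ![assumption | apply: mulr_gt0 | done].
rewrite -subr_ge0.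
have -> : ff lam c y - lL lam c y =
  3 * A2 lam c * c * Ef lam y * Gf c y ^+ 3 * (1 - Gf c y).
  rewrite /ff /lL /A2 /sS; field.
  by rewrite !lt0r_neq0 // addr_gt0 // mulr_gt0.
apply: mulr_ge0; last by rewrite subr_ge0.
apply: ltW; do ![assumption | apply: mulr_gt0 | apply: exprn_gt0 | done].
Qed.
Lemma Hf_lim {R : realType} (lam c : R) : 0 < lam -> 0 < c ->
  Hf lam c x @[x --> +oo] --> 0.
Proof.
move=> l0 c0.
have hA : 0 < Aup lam c by rewrite /Aup divr_gt0 // addr_gt0 // mulr_gt0.
apply: (@lim0 R lam (Aup lam c + 1) (fun y => Aup lam c * Gf c y ^+ 2 - Gf c y) l0).
move=> y y0.
have hG := Gf_gt0 c y (ltW c0) y0; have hG1 := Gf_le1 c y (ltW c0) y0.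
have hG2 : Gf c y ^+ 2 <= 1 by rewrite expr_le1 // ltW.
have hG2' : 0 <= Gf c y ^+ 2 by rewrite exprn_ge0 // ltW.
rewrite ler_norml; apply/andP; split; nra.
Qed.

Lemma G2_lim {R : realType} (lam c : R) : 0 < lam -> 0 < c ->
  G2 lam c x @[x --> +oo] --> 0.
Proof.
move=> l0 c0.
have hs : 0 < sS lam c by rewrite /sS divr_gt0.
have hA : 0 < A2 lam c.
  rewrite /A2; apply: divr_gt0; first by do ![assumption|apply: mulr_gt0|done].
  by apply: addr_gt0 => //; apply: mulr_gt0.
apply: (@lim0 R lam (sS lam c + 1 + A2 lam c)
  (fun y => sS lam c * Gf c y ^+ 2 - Gf c y - A2 lam c * Gf c y ^+ 3) l0).
move=> y y0.
have hG := Gf_gt0 c y (ltW c0) y0; have hG1 := Gf_le1 c y (ltW c0) y0.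
have hG2 : Gf c y ^+ 2 <= 1 by rewrite expr_le1 // ltW.
have hG3 : Gf c y ^+ 3 <= 1 by rewrite expr_le1 // ltW.
have hG2' : 0 <= Gf c y ^+ 2 by rewrite exprn_ge0 // ltW.
have hG3' : 0 <= Gf c y ^+ 3 by rewrite exprn_ge0 // ltW.
rewrite ler_norml; apply/andP; split; nra.
Qed.

Lemma split_int {R : realType} (f : R -> R) (b : R) : 0 <= b ->
  (forall x, 0 <= x -> derivable f x 1) -> (forall x, 0 <= x -> 0 <= f x) ->
  (\int[lebesgue_measure]_(x in `[0%R, +oo[) (f x)%:E =
   \int[lebesgue_measure]_(x in `[0%R, b]) (f x)%:E +
   \int[lebesgue_measure]_(x in `[b, +oo[) (f x)%:E)%E.
Proof.
move=> b0 df f0.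
have mf : forall a : R, 0 <= a -> measurable_fun `[a, +oo[ (EFin \o f).
  move=> a a0; apply: meas_cy => x; rewrite in_itv /= andbT => ax.
  by apply: df; exact: le_trans ax.
rewrite (@itv_bndbnd_setU _ _ (BLeft 0) (BRight b) (BInfty _ false)) //.
rewrite ge0_integral_setU //=.
- rewrite integral_itv_obnd_cbnd //.
  apply: (measurable_funS _ _ (mf b b0)) => //.
  by apply: subset_itvr; rewrite bnd_simp.
- rewrite -itv_bndbnd_setU //.
  exact: mf.
- move=> x; rewrite !in_itv /= => -[/andP[x0 _]|/andP[bx _]]; rewrite lee_fin f0 //.
  by apply: le_trans (ltW bx).
- apply/disj_setPS => y [/=]; rewrite 2!in_itv/= => /andP[_ yx] /andP[].
  by rewrite ltNge yx.
Qed.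
Lemma I_upper {R : realType} (lam c : R) : 0 < lam -> 0 < c ->
  (\int[lebesgue_measure]_(x in `[0%R, +oo[) (ff lam c x)%:E <=
   (F1 lam c lam^-1 - F1 lam c 0 + (0 - Hf lam c lam^-1))%:E)%E.
Proof.
move=> l0 c0.
have b0 : 0 < lam^-1 by rewrite invr_gt0.
rewrite (split_int (ff lam c) _ (ltW b0)); last 2 first.
- by move=> x x0; apply: dff => //; exact: ltW.
- by move=> x x0; apply: ff_ge0 => //; exact: ltW.
rewrite EFinD; apply: leeD.
- apply: (cmp_cc_le (ff lam c) (u1 lam c) (F1 lam c)); first exact: b0.
  + by move=> x; rewrite in_itv /= => /andP[x0 _]; apply: dff => //; exact: ltW.
  + by move=> x; rewrite in_itv /= => /andP[x0 _]; apply: dF1.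
  + by move=> x; rewrite in_itv /= => /andP[x0 _]; apply: du1 => //; exact: ltW.
  + by move=> x; rewrite in_itv /= => /andP[x0 _]; by apply: ff_le_u1.
- apply: (cmp_cy_le (ff lam c) (hU lam c) (Hf lam c)).
  + move=> x; rewrite in_itv /= andbT => bx; apply: dff; first exact: ltW.
    exact: le_trans (ltW b0) bx.
  + move=> x; rewrite in_itv /= andbT => bx; apply: dHf => //.
    exact: le_trans (ltW b0) bx.
  + move=> x; rewrite in_itv /= andbT => bx; apply: dhU; first exact: ltW.
    exact: le_trans (ltW b0) bx.
  + move=> x bx; apply: hU_ok => //; exact: le_trans (ltW b0) bx.
  + exact: Hf_lim.
Qed.

Lemma I_lower {R : realType} (lam c : R) : 0 < lam -> 0 < c ->
  ((G1 lam c (2 / lam) - G1 lam c 0 + (0 - G2 lam c (2 / lam)))%:E <=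
   \int[lebesgue_measure]_(x in `[0%R, +oo[) (ff lam c x)%:E)%E.
Proof.
move=> l0 c0.
have b0 : 0 < 2 / lam by rewrite divr_gt0.
rewrite (split_int (ff lam c) _ (ltW b0)); last 2 first.
- by move=> x x0; apply: dff => //; exact: ltW.
- by move=> x x0; apply: ff_ge0 => //; exact: ltW.
rewrite EFinD; apply: leeD.
- apply: (cmp_cc_ge (ff lam c) (mL lam c) (G1 lam c)); first exact: b0.
  + by move=> x; rewrite in_itv /= => /andP[x0 _]; apply: dff => //; exact: ltW.
  + by move=> x; rewrite in_itv /= => /andP[x0 _]; by apply: dG1.
  + by move=> x; rewrite in_itv /= => /andP[x0 _]; apply: dmL => //; exact: ltW.
  + by move=> x; rewrite in_itv /= => /andP[x0 x2]; by apply: mL_ok.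
- apply: (cmp_cy_ge (ff lam c) (lL lam c) (G2 lam c)).
  + move=> x; rewrite in_itv /= andbT => bx; apply: dff; first exact: ltW.
    exact: le_trans (ltW b0) bx.
  + move=> x; rewrite in_itv /= andbT => bx; apply: dG2 => //.
    exact: le_trans (ltW b0) bx.
  + move=> x; rewrite in_itv /= andbT => bx; apply: dlL; first exact: ltW.
    exact: le_trans (ltW b0) bx.
  + by move=> x bx; apply: lL_ok.
  + exact: G2_lim.
Qed.
Lemma Ef0 {R : realType} (lam : R) : Ef lam 0 = 1.
Proof. by rewrite /Ef mulr0 oppr0 expR0. Qed.
Lemma Gf0 {R : realType} (c : R) : Gf c 0 = 1.
Proof. by rewrite /Gf mulr0 addr0 invr1. Qed.

Lemma UB_lt {R : realType} (lam c : R) : 0 < lam -> 0 < c ->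
  F1 lam c lam^-1 - F1 lam c 0 + (0 - Hf lam c lam^-1)
  < (c / lam)^-1 * ln (1 + c / lam).
Proof.
move=> l0 c0.
have b0 : 0 < lam^-1 by rewrite invr_gt0.
have hG := Gf_gt0 c lam^-1 (ltW c0) (ltW b0).
have hE := Ef_gt0 lam lam^-1.
have hA : 0 < Aup lam c by rewrite /Aup divr_gt0 // addr_gt0 // mulr_gt0.
rewrite /F1 /Hf Ef0 Gf0 mulr0 addr0 ln1.
set e := Ef lam lam^-1.
set L := ln (1 + c / lam).
rewrite -subr_gt0.
have -> : (c / lam)^-1 * L -
   (- (e * Gf c lam^-1) + (1 + lam / c) * Gf c lam^-1 + lam / c * L -
    (- (1 * 1) + (1 + lam / c) * 1 + lam / c * 0) +
    (0 - e * (Aup lam c * Gf c lam^-1 ^+ 2 - Gf c lam^-1)))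
   = Aup lam c * e * Gf c lam^-1 ^+ 2.
  have h1 : 1 + c / lam != 0 by rewrite lt0r_neq0 // addr_gt0 // divr_gt0.
  rewrite /Gf; field.
  by apply/and3P; split; apply: lt0r_neq0 => //; apply: addr_gt0.
by do ![assumption | apply: mulr_gt0 | apply: exprn_gt0 | done].
Qed.

Lemma LB_gt {R : realType} (lam c : R) : 0 < lam -> 0 < c ->
  (2 * (c / lam))^-1 * ln (1 + 2 * (c / lam))
  < G1 lam c (2 / lam) - G1 lam c 0 + (0 - G2 lam c (2 / lam)).
Proof.
move=> l0 c0.
have b0 : 0 < 2 / lam by rewrite divr_gt0.
have hG := Gf_gt0 c (2 / lam) (ltW c0) (ltW b0).
have hE := Ef_gt0 lam (2 / lam).
have hs : 0 < sS lam c by rewrite /sS divr_gt0.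
have hA : 0 < A2 lam c.
  rewrite /A2; apply: divr_gt0; first by do ![assumption|apply: mulr_gt0|done].
  by apply: addr_gt0 => //; apply: mulr_gt0.
have key : G1 lam c (2 / lam) - G1 lam c 0 + (0 - G2 lam c (2 / lam)) =
  (2 * (c / lam))^-1 * ln (1 + 2 * (c / lam))
  + A2 lam c * Ef lam (2 / lam) * Gf c (2 / lam) ^+ 3.
  rewrite /G1 /G2 Ef0 Gf0 mulr0 addr0 ln1.
  rewrite (_ : 1 + c * (2 / lam) = 1 + 2 * (c / lam)); last by ring.
  rewrite /Gf /A2 /aA /sS; field.
  apply/and4P; split; apply: lt0r_neq0 => //; apply: addr_gt0 => //;
    by apply: mulr_gt0.
rewrite key ltrDl.
by do ![assumption | apply: mulr_gt0 | apply: exprn_gt0 | done].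
Qed.

Lemma phi_eq {R : realType} (K : nat) (beta alpha pce delta sigma2 : R) :
  0 < beta -> K%:R * sigma2 != 0 ->
  phi K beta alpha pce delta sigma2 =
  fine (\int[lebesgue_measure]_(x in `[0%R, +oo[)
          (ff beta^-1 (beta * alpha * pce * delta / (K%:R * sigma2)) x)%:E)%E.
Proof.
move=> b0 hK.
rewrite /phi /Rintegral; congr fine.
rewrite [RHS]integral_mkcond; apply: eq_integral => x _.
rewrite /patch; case: ifPn.
  rewrite inE /= in_itv /= andbT => x0.
  rewrite exponential_pdfE //= /ff /Ef /Gf mulNr.
  congr (_ * _ * _^-1)%:E.
  by rewrite addrC; congr (_ + _); ring.
move=> hx.
have x0 : x < 0.
  rewrite ltNge; apply: contra hx => x0.
  by apply: mem_set; rewrite /= in_itv /= andbT.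
by rewrite lt0_exponential_pdf // mul0r.
Qed.

Local Close Scope classical_set_scope.

Theorem proposition1 (R : realType) (K M : nat)
  (p beta alpha pce delta sigma2 zeta : R) :
  (1 <= K)%N -> (2 <= M)%N ->
  0 < p -> 0 < beta -> 0 < alpha -> 0 < pce -> 0 < delta -> 0 < sigma2 ->
  0 < zeta -> zeta <= 1 ->
  p * beta * (zeta * (M%:R - 1) * L1 K beta alpha pce delta sigma2 + 1)
    < P_Ik K M p beta alpha pce delta sigma2 zeta /\
  P_Ik K M p beta alpha pce delta sigma2 zeta
    < p * beta * (zeta * (M%:R - 1) * L2 K beta alpha pce delta sigma2 + 1).
Proof.
move=> K1 M2 p0 b0 a0 pc0 d0 s0 z0 z1.
have hK0 : 0 < K%:R * sigma2 :> R by rewrite mulr_gt0 // ltr0n.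
have hK : K%:R * sigma2 != 0 :> R by rewrite lt0r_neq0.
have hM : 0 < M%:R - 1 :> R by rewrite subr_gt0 ltr1n.
have l0 : 0 < beta^-1 by rewrite invr_gt0.
have c0 : 0 < beta * alpha * pce * delta / (K%:R * sigma2).
  by rewrite divr_gt0 // !mulr_gt0.
have hphi := phi_eq K beta alpha pce delta sigma2 b0 hK.
set lam := beta^-1 in l0 hphi.
set c := beta * alpha * pce * delta / (K%:R * sigma2) in c0 hphi.
set I := (\int[lebesgue_measure]_(x in _) _)%E in hphi.
have hU := I_upper lam c l0 c0; have hL := I_lower lam c l0 c0.
rewrite -/I in hU hL.
have I0 : (0 <= I)%E.
  apply: integral_ge0 => x; rewrite /= in_itv /= andbT => x0.
  by rewrite lee_fin ff_ge0 // ltW.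
have Ifin : I = (fine I)%:E.
  rewrite fineK // ge0_fin_numE //.
  by apply: le_lt_trans hU _; rewrite ltry.
rewrite Ifin !lee_fin in hU hL.
rewrite -hphi in hU hL.
have phU := le_lt_trans hU (UB_lt lam c l0 c0).
have phL := lt_le_trans (LB_gt lam c l0 c0) hL.
set s := beta ^+ 2 * alpha * pce * delta / (K%:R * sigma2).
have hs : c / lam = s.
  rewrite /c /lam /s; field; by rewrite ?(gt_eqF s0) ?(gt_eqF b0) ?(gt_eqF a0) ?(gt_eqF pc0) ?(gt_eqF d0) ?pnatr_eq0 -?lt0n ?K1.
rewrite hs in phU phL.
have hs1 : K%:R * sigma2 / (beta ^+ 2 * alpha * pce * delta) = s^-1.
  rewrite /s; field; by rewrite ?(gt_eqF s0) ?(gt_eqF b0) ?(gt_eqF a0) ?(gt_eqF pc0) ?(gt_eqF d0) ?pnatr_eq0 -?lt0n ?K1.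
have hs2 : K%:R * sigma2 / (2 * beta ^+ 2 * alpha * pce * delta) = (2 * s)^-1.
  rewrite /s; field; by rewrite ?(gt_eqF s0) ?(gt_eqF b0) ?(gt_eqF a0) ?(gt_eqF pc0) ?(gt_eqF d0) ?pnatr_eq0 -?lt0n ?K1.
have hs3 : 2 * beta ^+ 2 * alpha * pce * delta / (K%:R * sigma2) = 2 * s.
  by rewrite /s; ring.
rewrite /P_Ik /L1 /L2 hs1 hs2 hs3 -/s.
set ph := phi K beta alpha pce delta sigma2 in phU phL *.
have pb : 0 < p * beta by rewrite mulr_gt0.
have zm : 0 < zeta * (M%:R - 1) by rewrite mulr_gt0.
split.
  have hd : 0 < s^-1 * ln (1 + s) - ph by rewrite subr_gt0.
  have h := mulr_gt0 (mulr_gt0 pb zm) hd.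
  nra.
have hd : 0 < ph - (2 * s)^-1 * ln (1 + 2 * s) by rewrite subr_gt0.
have h := mulr_gt0 (mulr_gt0 pb zm) hd.
nra.
Qed.
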